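(* For every integer $n\ge2$ there is a complete weighted graph $G=(V,w)$ on $n$ vertices with $\mathrm{cdim}(G)=2n-3$ and minimum cut weight $1$, such that for every $v\in V$ the star cut $\Delta(\{v\})$ is a minimum cut.
   Context: A complete weighted graph $G=(V,w)$ assigns a positive weight to every unordered pair of distinct vertices. For $\emptyset\ne X\subsetneq V$, $\Delta(X)$ is the set of edges with exactly one endpoint in $X$, of weight equal to the sum of their weights. $\mathcal{M}(G)$ is the set of minimum-weight cuts; $\chi(S)$ is the characteristic vector of $S$ indexed by the edges; $\mathrm{cdim}(G)=\dim\,\mathrm{span}\{\chi(S):S\in\mathcal{M}(G)\}$. *)

(* Defs.v *)
From HB Require Import structures.
From mathcomp Require Import all_boot all_order all_algebra.
From mathcomp Require Import reals.
Set Implicit Arguments. Unset Strict Implicit. Unset Printing Implicit Defensive.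
Import Order.TTheory GRing.Theory Num.Theory.
Local Open Scope ring_scope.

Definition edge (n : nat) := {e : {set 'I_n} | #|e| == 2%N}.

Definition weighting (R : realType) (n : nat) := {ffun edge n -> R}.

Definition positive_weighting (R : realType) n (w : weighting R n) :=
  forall e, 0 < w e.

Definition crosses n (X : {set 'I_n}) (e : edge n) : bool :=
  #|val e :&: X| == 1%N.

Definition proper_subset n (X : {set 'I_n}) : bool :=
  (X != set0) && (X != setT).

Definition cut_weight (R : realType) n (w : weighting R n) (X : {set 'I_n}) : R :=
  \sum_(e : edge n | crosses X e) w e.

Definition is_min_cut (R : realType) n (w : weighting R n) (X : {set 'I_n}) : bool :=
  proper_subset X &&
  [forall Y : {set 'I_n}, proper_subset Y ==> (cut_weight w X <= cut_weight w Y)].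

Definition min_cut_value (R : realType) n (w : weighting R n) (lam : R) : Prop :=
  (forall Y : {set 'I_n}, proper_subset Y -> lam <= cut_weight w Y) /\
  (exists2 X : {set 'I_n}, proper_subset X & cut_weight w X = lam).

Definition chi (R : realType) n (X : {set 'I_n}) : 'rV[R]_#|{: edge n}| :=
  \row_(k < #|{: edge n}|) (if crosses X (enum_val k) then 1 else 0).

(* matrix whose rows are chi(Delta(X)) for each X with Delta(X) a minimum cut,
   and 0 for the other X; its rank is dim span {chi(S) : S in M(G)}. *)
Definition mincut_matrix (R : realType) n (w : weighting R n)
  : 'M[R]_(#|{: {set 'I_n}}|, #|{: edge n}|) :=
  \matrix_(i < #|{: {set 'I_n}}|)
     (if is_min_cut w (enum_val i) then chi R (enum_val i) else 0).

Definition cdim (R : realType) n (w : weighting R n) : nat :=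
  \rank (mincut_matrix w).

(* Main.v *)
Require Import Defs.
From HB Require Import structures.
From mathcomp Require Import all_boot all_order all_algebra.
From mathcomp Require Import reals zify ring lra.
Set Implicit Arguments. Unset Strict Implicit. Unset Printing Implicit Defensive.
Import Order.TTheory GRing.Theory Num.Theory.

Definition g (i j t : nat) : nat :=
  if t == 0 then j else if t <= i.+1 then i.+1 - t else if t <= j then t.-1 else t.

Lemma g_lt N i j t : i < j -> j < N -> t < N -> g i j t < N.
Proof. rewrite /g => *; repeat case: ifP => ?; try (apply/idP/idP); lia. Qed.

Lemma g_inj N i j t s : i < j -> j < N -> t < N -> s < N -> g i j t = g i j s -> t = s.
Proof. rewrite /g => ? ? ? ?; repeat case: ifP => ?; lia. Qed.

Lemma g_pref N i j t m : i < j -> j < N -> t < N -> 0 < m ->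
  (g i j t < m) = if m <= i.+1 then (i.+2 - m <= t < i.+2)
                  else if m <= j then (1 <= t < m.+1) else (t < m).
Proof. rewrite /g => *; repeat case: ifP => ?; try (apply/idP/idP); lia. Qed.

Lemma seg (y : nat -> bool) p d :
  (y p != y (p + d)) <= \sum_(p <= t < p + d) (y t != y t.+1).
Proof.
elim: d => [|d IH]; first by rewrite addn0 eqxx.
rewrite addnS big_nat_recr /= ?leq_addr //.
move: IH; case: (y p); case: (y (p + d)); case: (y (p + d).+1) => /=; lia.
Qed.

Lemma seg' (y : nat -> bool) p q : p <= q ->
  (y p != y q) <= \sum_(p <= t < q) (y t != y t.+1).
Proof. by move=> pq; rewrite -(subnKC pq); apply: seg. Qed.

Lemma four (y : nat -> bool) N p q r s :
  p <= q -> q <= r -> r <= s -> s <= N -> y N = y 0 ->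
  (y p != y q) + (y q != y r) + (y r != y s) + (y s != y p) <=
  \sum_(0 <= t < N) (y t != y t.+1).
Proof.
move=> pq qr rs sN yN.
have pN : p <= N by lia. have qN : q <= N by lia. have rN : r <= N by lia.
rewrite (@big_cat_nat _ _ _ p 0 N) //= (@big_cat_nat _ _ _ q p N) //=.
rewrite (@big_cat_nat _ _ _ r q N) //= (@big_cat_nat _ _ _ s r N) //=.
have h1 := seg' y (leq0n p); have h2 := seg' y pq; have h3 := seg' y qr.
have h4 := seg' y rs; have h5 := seg' y sN; rewrite yN in h5.
move: h1 h2 h3 h4 h5; case: (y 0); case: (y p); case: (y q); case: (y r); case: (y s) => /=; lia.
Qed.

Lemma cntS a M : \sum_(0 <= t < M) (t.+1 == a) = (0 < a <= M).
Proof.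
elim: M => [|M IH]; first by rewrite big_geq //; lia.
rewrite big_nat_recr //= IH; lia.
Qed.

Lemma window (y : nat -> bool) N p q : p < q -> q <= N ->
  (forall t, t < N -> y t = (p <= t < q)) -> y N = y 0 ->
  \sum_(0 <= t < N) (y t != y t.+1) <= 2.
Proof.
move=> pq qN yw yN.
case: N qN yw yN => [|M] qN yw yN; first lia.
rewrite big_nat_recr //= yN (yw M) // (yw 0) //.
have : \sum_(0 <= t < M) (y t != y t.+1) <=
       \sum_(0 <= t < M) ((t.+1 == p) + (t.+1 == q)).
  rewrite big_nat_cond [X in _ <= X]big_nat_cond.
  apply: leq_sum => t /andP[/andP[_ tM] _]; rewrite (yw t) ?(yw t.+1); lia.
rewrite big_split /= !cntS; lia.
Qed.

Definition cyc N (c : 'I_N * 'I_N) (t : nat) : nat :=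
  if c.1 < c.2 then g c.1 c.2 t else t.

Lemma cyc_lt N (c : 'I_N * 'I_N) t : t < N -> cyc c t < N.
Proof. rewrite /cyc; case: ifP => // h tN; exact: g_lt. Qed.

Lemma cyc_inj N (c : 'I_N * 'I_N) t s : t < N -> s < N -> cyc c t = cyc c s -> t = s.
Proof. rewrite /cyc; case: ifP => // h tN sN; exact: g_inj. Qed.

Definition pos k (c : 'I_k.+2 * 'I_k.+2) (t : nat) : 'I_k.+2 :=
  inord (cyc c (t %% k.+2)).

Lemma posE k (c : 'I_k.+2 * 'I_k.+2) t : t < k.+2 -> pos c t = cyc c t :> nat.
Proof. by move=> tN; rewrite /pos modn_small // inordK // cyc_lt. Qed.

Lemma pos_mod k (c : 'I_k.+2 * 'I_k.+2) t : pos c (t %% k.+2) = pos c t.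
Proof. by rewrite /pos modn_mod. Qed.

Lemma pos_neq k (c : 'I_k.+2 * 'I_k.+2) t : pos c t != pos c t.+1.
Proof.
apply/eqP => /(congr1 (@nat_of_ord _)); rewrite -(pos_mod c t) -(pos_mod c t.+1).
rewrite !posE ?ltn_pmod // => /cyc_inj; rewrite !ltn_pmod // => /(_ isT isT).
have := ltn_pmod t (isT : 0 < k.+2).
have := modnDml t 1 k.+2; rewrite !addn1 => <-.
move: (t %% k.+2) => r rN.
have [rlt|] := ltnP r.+1 k.+2; first by rewrite modn_small //; lia.
move=> rge; have -> : r.+1 = k.+2 by lia.
rewrite modnn; lia.
Qed.

Lemma E_card k (c : 'I_k.+2 * 'I_k.+2) t : #|[set pos c t; pos c t.+1]| == 2.
Proof. by rewrite cards2 pos_neq. Qed.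

Definition E k (c : 'I_k.+2 * 'I_k.+2) t : edge k.+2 :=
  exist _ [set pos c t; pos c t.+1] (E_card c t).

Lemma crosses2 N (X : {set 'I_N}) (a b : 'I_N) : a != b ->
  (#|[set a; b] :&: X| == 1) = ((a \in X) != (b \in X)).
Proof.
move=> ab; case ha: (a \in X); case hb: (b \in X) => /=.
- have -> : [set a; b] :&: X = [set a; b].
    by apply/setIidPl/subsetP => x; rewrite !inE => /orP[]/eqP->.
  by rewrite cards2 ab.
- have -> : [set a; b] :&: X = [set a].
    apply/setP => x; rewrite !inE; have [->|xa] := eqVneq x a; first by rewrite ha.
    by have [->|] := eqVneq x b; rewrite ?hb.
  by rewrite cards1.
- have -> : [set a; b] :&: X = [set b].
    apply/setP => x; rewrite !inE; have [->|xb] := eqVneq x b; first by rewrite hb orbT.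
    by have [->|] := eqVneq x a; rewrite ?ha.
  by rewrite cards1.
- have -> : [set a; b] :&: X = set0.
    apply/setP => x; rewrite !inE; have [->|xa] := eqVneq x a; first by rewrite ha.
    by have [->|] := eqVneq x b; rewrite ?hb.
  by rewrite cards0.
Qed.

Lemma crossesE k (X : {set 'I_k.+2}) c t :
  crosses X (E c t) = ((pos c t \in X) != (pos c t.+1 \in X)).
Proof. by rewrite /crosses /= crosses2 // pos_neq. Qed.

Definition KK k : nat := 2 * (k.+2 * k.+2).

Definition wt (R : realType) k : weighting R k.+2 :=
  [ffun e => ((\sum_(c : 'I_k.+2 * 'I_k.+2) \sum_(t < k.+2) (e == E c t : nat))%:R
               / (KK k)%:R)%R].

Definition cnt k (X : {set 'I_k.+2}) (c : 'I_k.+2 * 'I_k.+2) : nat :=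
  \sum_(t < k.+2) ((pos c t \in X) != (pos c t.+1 \in X)).

Lemma sum_eq1 (T : finType) (P : pred T) (a : T) :
  \sum_(e | P e) (e == a : nat) = P a.
Proof.
rewrite big_mkcond (bigD1 a) //= big1 => [|e /negbTE ->]; last by case: (P e).
by rewrite eqxx addn0; case: (P a).
Qed.

Lemma cutE (R : realType) k (X : {set 'I_k.+2}) :
  cut_weight (wt R k) X = ((\sum_c cnt X c)%:R / (KK k)%:R)%R.
Proof.
have wE : forall e, wt R k e = ((\sum_(c : 'I_k.+2 * 'I_k.+2) \sum_(t < k.+2) (e == E c t : nat))%:R / (KK k)%:R)%R by move=> e; rewrite ffunE.
rewrite /cut_weight (eq_bigr _ (fun e _ => wE e)).
rewrite -mulr_suml -natr_sum; congr (_%:R / _)%R.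
rewrite exchange_big /=; apply: eq_bigr => c _.
rewrite exchange_big /=; apply: eq_bigr => t _.
by rewrite sum_eq1 crossesE.
Qed.

Lemma pos_inj k (c : 'I_k.+2 * 'I_k.+2) t s :
  t < k.+2 -> s < k.+2 -> pos c t = pos c s -> t = s.
Proof.
move=> tN sN /(congr1 (@nat_of_ord _)); rewrite !posE //; exact: cyc_inj.
Qed.

Lemma pos_surj k (c : 'I_k.+2 * 'I_k.+2) (v : 'I_k.+2) :
  exists2 t, t < k.+2 & pos c t = v.
Proof.
have inj : injective (fun t : 'I_k.+2 => pos c t).
  by move=> t s /pos_inj => /(_ (ltn_ord t) (ltn_ord s)) /val_inj.
have [h hK Kh] := injF_bij inj.
by exists (h v) => //; rewrite Kh.
Qed.

Lemma cntE k (X : {set 'I_k.+2}) c :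
  cnt X c = \sum_(0 <= t < k.+2) ((pos c t \in X) != (pos c t.+1 \in X)).
Proof. by rewrite /cnt big_mkord. Qed.

Lemma posN k (c : 'I_k.+2 * 'I_k.+2) : pos c k.+2 = pos c 0.
Proof. by rewrite -pos_mod modnn. Qed.

Lemma four_cnt k (X : {set 'I_k.+2}) c p q r s :
  p <= q -> q <= r -> r <= s -> s <= k.+2 ->
  ((pos c p \in X) != (pos c q \in X)) + ((pos c q \in X) != (pos c r \in X)) +
  ((pos c r \in X) != (pos c s \in X)) + ((pos c s \in X) != (pos c p \in X))
  <= cnt X c.
Proof.
move=> pq qr rs sN; rewrite cntE.
apply: (four (y := fun t => pos c t \in X)) => //=; by rewrite posN.
Qed.

Lemma cnt_ge2 k (X : {set 'I_k.+2}) c : proper_subset X -> 2 <= cnt X c.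
Proof.
case/andP => /set0Pn [u uX] /eqP XT.
have [v _ vX] : exists2 v, v \in [set: 'I_k.+2] & v \notin X.
  by apply/subsetPn; rewrite subTset; apply/eqP.
have [t tN pt] := pos_surj c u; have [s sN ps] := pos_surj c v.
have [ts|st] := leqP t s.
  have := four_cnt X c ts (leqnn s) (leqnn s) (ltnW sN).
  by rewrite pt ps uX (negbTE vX) /=; lia.
have := four_cnt X c (ltnW st) (leqnn t) (leqnn t) (ltnW tN).
by rewrite pt ps uX (negbTE vX) /=; lia.
Qed.

Lemma cnt_window k (X : {set 'I_k.+2}) c p q : p < q -> q <= k.+2 ->
  (forall t, t < k.+2 -> (pos c t \in X) = (p <= t < q)) -> cnt X c <= 2.
Proof.
move=> pq qN h; rewrite cntE; apply: (window (y := fun t => pos c t \in X)) pq qN _ _ => //.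
by rewrite posN.
Qed.

Lemma cnt_star k (v : 'I_k.+2) c : cnt [set v] c <= 2.
Proof.
have [t0 t0N pt0] := pos_surj c v.
apply: (cnt_window (p := t0) (q := t0.+1)) => // t tN.
rewrite inE -pt0; apply/eqP/idP => [/pos_inj -> //|]; first lia.
by move=> h; have -> : t = t0 by lia.
Qed.

Definition pref k (m : nat) : {set 'I_k.+2} := [set u : 'I_k.+2 | u < m].

Lemma cnt_pref k m c : 0 < m -> m <= k.+2 -> cnt (pref k m) c <= 2.
Proof.
move=> m0 mN.
have E1 : forall t, t < k.+2 -> (pos c t \in pref k m) = (cyc c t < m).
  by move=> t tN; rewrite inE posE.
rewrite /cyc in E1; case: (ltnP c.1 c.2) => ij; last first.
  by rewrite ltnNge ij /= in E1; apply: (cnt_window (p := 0) (q := m)) => // t tN; rewrite E1.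
rewrite ij in E1.
  have jN := ltn_ord c.2.
case: (leqP m (c.1).+1) => h1.
    apply: (cnt_window (p := (c.1).+2 - m) (q := (c.1).+2)); try lia.
    by move=> t tN; rewrite E1 // (g_pref ij jN tN m0) h1.
  case: (leqP m c.2) => h2.
    apply: (cnt_window (p := 1) (q := m.+1)); try lia.
    by move=> t tN; rewrite E1 // (g_pref ij jN tN m0) (leqNgt m c.1.+1) h1 h2.
  apply: (cnt_window (p := 0) (q := m)); try lia.
  by move=> t tN; rewrite E1 // (g_pref ij jN tN m0) (leqNgt m c.1.+1) h1 (leqNgt m c.2) h2.
Qed.

Lemma sum2 k : \sum_(c : 'I_k.+2 * 'I_k.+2) 2 = KK k.
Proof. by rewrite sum_nat_const card_prod card_ord /KK mulnC. Qed.

Lemma KK_gt0 (R : realType) k : (0 < (KK k)%:R :> R)%R.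
Proof. by rewrite ltr0n /KK. Qed.

Lemma cut_ge1 (R : realType) k (X : {set 'I_k.+2}) :
  proper_subset X -> (1 <= cut_weight (wt R k) X)%R.
Proof.
move=> pX; rewrite cutE ler_pdivlMr ?KK_gt0 // mul1r ler_nat -sum2.
by apply: leq_sum => c _; apply: cnt_ge2.
Qed.

Lemma cut_le1 (R : realType) k (X : {set 'I_k.+2}) :
  (forall c, cnt X c <= 2) -> (cut_weight (wt R k) X <= 1)%R.
Proof.
move=> h; rewrite cutE ler_pdivrMr ?KK_gt0 // mul1r ler_nat -sum2.
by apply: leq_sum => c _; apply: h.
Qed.

Lemma proper1 k (v : 'I_k.+2) : proper_subset [set v].
Proof.
apply/andP; split; first by apply/set0Pn; exists v; rewrite inE.
apply/eqP => h; have := cardsT 'I_k.+2; rewrite -h cards1 card_ord.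
by [].
Qed.

Lemma cut_star (R : realType) k (v : 'I_k.+2) : cut_weight (wt R k) [set v] = 1%R.
Proof.
apply/eqP; rewrite eq_le cut_le1 ?cut_ge1 //; [exact: proper1 | exact: cnt_star].
Qed.

Lemma mincut_star (R : realType) k (v : 'I_k.+2) : is_min_cut (wt R k) [set v].
Proof.
rewrite /is_min_cut proper1; apply/forallP => Y; apply/implyP => pY.
by rewrite cut_star cut_ge1.
Qed.

Lemma proper_pref k m : 0 < m -> m < k.+2 -> proper_subset (pref k m).
Proof.
move=> m0 mN; apply/andP; split.
  by apply/set0Pn; exists ord0; rewrite inE.
apply/eqP => /setP /(_ (Ordinal mN)); rewrite !inE /=; lia.
Qed.

Lemma mincut_pref (R : realType) k m : 0 < m -> m < k.+2 -> is_min_cut (wt R k) (pref k m).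
Proof.
move=> m0 mN; rewrite /is_min_cut proper_pref //; apply/forallP => Y; apply/implyP => pY.
apply: le_trans (cut_ge1 _ pY); apply: cut_le1 => c; apply: cnt_pref => //; lia.
Qed.

Lemma mincut_cnt (R : realType) k (X : {set 'I_k.+2}) :
  is_min_cut (wt R k) X -> forall c, cnt X c <= 2.
Proof.
case/andP => pX /forallP /(_ [set ord0]); rewrite proper1 /= cut_star.
rewrite cutE ler_pdivrMr ?KK_gt0 // mul1r ler_nat -sum2 => hs c.
rewrite (bigD1 c) //= [Y in _ <= Y](bigD1 c) //= in hs.
have : \sum_(i | i != c) 2 <= \sum_(i | i != c) cnt X i.
  by apply: leq_sum => i _; apply: cnt_ge2.
move=> h2; rewrite -(leq_add2r (\sum_(i | i != c) cnt X i)); apply: (leq_trans hs); by rewrite leq_add2l.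
Qed.

Lemma crossesC n (X : {set 'I_n}) e : crosses (~: X) e = crosses X e.
Proof.
rewrite /crosses; have := cardsID X (val e); rewrite setDE (setIC _ (~: X)).
case: e => e /= /eqP ->; move=> h; apply/eqP/eqP; lia.
Qed.

Lemma chiC (R : realType) n (X : {set 'I_n}) : chi R (~: X) = chi R X.
Proof. by apply/rowP => i; rewrite !mxE crossesC. Qed.

Lemma cntC k (X : {set 'I_k.+2}) c : cnt (~: X) c = cnt X c.
Proof.
rewrite /cnt; apply: eq_bigr => t _; rewrite !inE.
by case: (pos c t \in X); case: (pos c t.+1 \in X).
Qed.

Lemma properC n (X : {set 'I_n}) : proper_subset X -> proper_subset (~: X).
Proof.
case/andP => X0 XT; apply/andP; split.
  apply: contra XT => /eqP/(congr1 (@setC _)); rewrite setCK setC0 => ->; by [].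
apply: contra X0 => /eqP/(congr1 (@setC _)); rewrite setCK setCT => ->; by [].
Qed.

Lemma pos_id k t : t < k.+2 -> pos ((ord0 : 'I_k.+2), (ord0 : 'I_k.+2)) t = t :> nat.
Proof. by move=> tN; rewrite posE // /cyc /= ltnn. Qed.

Lemma classify (R : realType) k (X : {set 'I_k.+2}) : is_min_cut (wt R k) X ->
  (exists2 v : 'I_k.+2, v < k.+1 & chi R X = chi R [set v]) \/
  (exists2 m, 2 <= m <= k.+1 & chi R X = chi R (pref k m)).
Proof.
move=> mX; have hc := mincut_cnt mX; have pX : proper_subset X by case/andP: mX.
move: hc pX; clear mX.
wlog h0 : X / ord0 \notin X.
  move=> W hc pX; case: (boolP (ord0 \in X)) => h0; last exact: W.
  rewrite -chiC; apply: W; first by rewrite inE h0.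
    by move=> c; rewrite cntC.
  exact: properC.
move=> hc pX.
set c0 := ((ord0 : 'I_k.+2), (ord0 : 'I_k.+2)).
have convex : forall u v w : 'I_k.+2, u < v -> v < w -> u \in X -> w \in X -> v \in X.
  move=> u v w uv vw uX wX; apply/negPn/negP => vX.
  have := four_cnt X c0 (leq0n u) (ltnW uv) (ltnW vw) (ltnW (ltn_ord w)).
  have e0 : pos c0 0 = ord0 by apply/ord_inj; rewrite pos_id.
  have eu : pos c0 u = u by apply/ord_inj; rewrite pos_id.
  have ev : pos c0 v = v by apply/ord_inj; rewrite pos_id.
  have ew : pos c0 w = w by apply/ord_inj; rewrite pos_id.
  rewrite e0 eu ev ew (negbTE h0) (negbTE vX) uX wX /=.
  by move/leq_trans/(_ (hc c0)).
case/andP: pX => /set0Pn [u0 u0X] _.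
case: (arg_minnP (fun i : 'I_k.+2 => i : nat) u0X) => a aX amin.
have a0 : 0 < a.
  apply: contraNT h0; rewrite -leqNgt leqn0 => /eqP a0.
  suff -> : (ord0 : 'I_k.+2) = a by [].
  by apply/ord_inj; rewrite /= a0.
case: (boolP (ord_max \in X)) => hmax.
  have XE : X = ~: pref k a.
    apply/setP => u; rewrite !inE -leqNgt; apply/idP/idP; first exact: amin.
    move=> au; have [ua|ua] := eqVneq u a; first by rewrite ua.
    have [um|um] := eqVneq u ord_max; first by rewrite um.
    apply: (convex a u ord_max) => //.
      by rewrite ltn_neqAle au andbT; apply: contra ua => /eqP h; apply/eqP/val_inj.
    rewrite ltn_neqAle -ltnS ltn_ord andbT; apply: contra um => /eqP h.
    by apply/eqP/val_inj.
  rewrite XE chiC.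
  have [a1|a1] := eqVneq (a : nat) 1.
    left; exists ord0 => //; congr chi; apply/setP => u; rewrite !inE -val_eqE /= a1.
    lia.
  right; exists a => //; have := ltn_ord a; lia.
have XE : X = [set a].
  apply/setP => u; rewrite !inE; apply/idP/eqP => [uX|->//].
  apply/ord_inj/eqP; apply/negPn/negP => ua.
  have au : a < u by rewrite ltn_neqAle eq_sym ua amin.
  have uk : u < k.+1.
    rewrite ltn_neqAle -ltnS ltn_ord andbT; apply: contraNneq hmax => h.
    by rewrite (_ : ord_max = u) //; apply/ord_inj.
  have a1N : a.+1 < k.+2 by lia.
  set b : 'I_k.+2 := Ordinal a1N.
  have bX : b \in X.
    have [bu|bu] := eqVneq (a.+1) u.
      by rewrite (_ : b = u) //; apply/ord_inj.
    apply: (convex a b u) => //=; lia.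
  set c := ((ord0 : 'I_k.+2), a).
  have := four_cnt X c (leq0n 1) (_ : 1 <= a.+1) (_ : a.+1 <= k.+1) (ltnW (ltnSn k.+1)).
  have e0 : pos c 0 = a by apply/ord_inj; rewrite posE // /cyc /= a0 /g.
  have e1 : pos c 1 = ord0.
    apply/ord_inj; rewrite posE // /cyc /= a0 /g /=; lia.
  have e2 : pos c a.+1 = b.
    apply/ord_inj; rewrite posE // /cyc /= a0 /g /=.
    repeat case: ifP => ?; lia.
  have e3 : pos c k.+1 = ord_max.
    apply/ord_inj; rewrite posE // /cyc /= a0 /g /=.
    repeat case: ifP => ?; lia.
have aX' : a \in X := aX.
  rewrite e0 e1 e2 e3 aX' bX (negbTE h0) (negbTE hmax) /= => h.
  have h' : a < k.+1 by lia.
  by have := leq_trans (h isT h') (hc c).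
left; exists a; last by rewrite XE.
rewrite ltn_neqAle -ltnS ltn_ord andbT; apply: contraNneq hmax => h.
have -> : (ord_max : 'I_k.+2) = a by apply/ord_inj.
exact: aX.
Qed.

Local Open Scope ring_scope.

Definition wid k (r : 'I_k.+1) : 'I_k.+2 := widen_ord (leqnSn k.+1) r.

Definition Smx (R : realType) k : 'M[R]_(k.+1, #|{: edge k.+2}|) :=
  \matrix_(r < k.+1) chi R [set wid r].
Definition Pmx (R : realType) k : 'M[R]_(k, #|{: edge k.+2}|) :=
  \matrix_(r < k) chi R (pref k r.+2).

Lemma ed_card n (a b : 'I_n) : a != b -> #|[set a; b]| == 2%N.
Proof. by move=> h; rewrite cards2 h. Qed.
Definition ed n (a b : 'I_n) (h : a != b) : edge n :=
  exist (fun e : {set 'I_n} => #|e| == 2%N) [set a; b] (ed_card h).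

Definition ent (R : realType) n (X : {set 'I_n}) (e : edge n) : R :=
  if crosses X e then 1 else 0.

Lemma entE (R : realType) n X (a b : 'I_n) (h : a != b) :
  ent R X (ed h) = if (a \in X) != (b \in X) then 1 else 0.
Proof. by rewrite /ent /crosses /= crosses2. Qed.

Lemma Bentry (R : realType) k (v : 'rV[R]_(k.+1 + k)) (a b : 'I_k.+2) (h : a != b) :
  (v *m col_mx (Smx R k) (Pmx R k)) 0 (enum_rank (ed h)) =
  \sum_(r < k.+1) v 0 (lshift k r) * ent R [set wid r] (ed h) +
  \sum_(r < k) v 0 (rshift k.+1 r) * ent R (pref k r.+2) (ed h).
Proof.
rewrite mxE big_split_ord /=; congr (_ + _); apply: eq_bigr => r _.
  by rewrite col_mxEu /Smx [X in _ * X]mxE /chi [X in _ * X]mxE enum_rankK.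
by rewrite col_mxEd /Pmx [X in _ * X]mxE /chi [X in _ * X]mxE enum_rankK.
Qed.

Lemma three (R : realType) k (al : 'I_k.+1 -> R) (be : 'I_k -> R) (i j l : 'I_k.+2)
  (hij : i != j) (hil : i != l) (hjl : j != l) : (i < j)%N -> (j < l)%N ->
  (\sum_r al r * ent R [set wid r] (ed hil) + \sum_r be r * ent R (pref k r.+2) (ed hil))
  - (\sum_r al r * ent R [set wid r] (ed hij) + \sum_r be r * ent R (pref k r.+2) (ed hij))
  - (\sum_r al r * ent R [set wid r] (ed hjl) + \sum_r be r * ent R (pref k r.+2) (ed hjl))
  = -2 * \sum_r al r * (wid r == j)%:R.
Proof.
move=> ij jl.
have eS : \sum_r al r * ent R [set wid r] (ed hil) - \sum_r al r * ent R [set wid r] (ed hij)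
   - \sum_r al r * ent R [set wid r] (ed hjl) = -2 * \sum_r al r * (wid r == j)%:R.
  rewrite -!sumrB mulr_sumr; apply: eq_bigr => r _; rewrite !entE !inE.
  set w := wid r.
  case: (eqVneq i w) => iw; case: (eqVneq j w) => jw; case: (eqVneq l w) => lw /=;
    try (exfalso; move: hij hil hjl; rewrite ?iw ?jw ?lw ?eqxx; done); ring.
have eP : \sum_r be r * ent R (pref k r.+2) (ed hil) - \sum_r be r * ent R (pref k r.+2) (ed hij)
   - \sum_r be r * ent R (pref k r.+2) (ed hjl) = 0.
  rewrite -!sumrB big1 // => r _; rewrite !entE !inE.
  case: (ltnP i r.+2) => h1; case: (ltnP j r.+2) => h2; case: (ltnP l r.+2) => h3 /=;
    try (exfalso; lia); ring.
lra.
Qed.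

Lemma wid_eq k (r s : 'I_k.+1) : (wid r == wid s) = (r == s).
Proof. by rewrite -val_eqE /= val_eqE. Qed.

Lemma Bfree (R : realType) k : row_free (col_mx (Smx R k) (Pmx R k)).
Proof.
apply: inj_row_free => v hv.
have G : forall (a b : 'I_k.+2) (h : a != b),
    \sum_r v 0 (lshift k r) * ent R [set wid r] (ed h) +
    \sum_r v 0 (rshift k.+1 r) * ent R (pref k r.+2) (ed h) = 0.
  by move=> a b h; rewrite -Bentry hv mxE.
have S1 : forall r : 'I_k.+1, (0 < r)%N -> v 0 (lshift k r) = 0.
  move=> r r0.
  have hij : (ord0 : 'I_k.+2) != wid r by apply/eqP => /(congr1 (@nat_of_ord _)) /=; lia.
  have hil : (ord0 : 'I_k.+2) != ord_max by apply/eqP => /(congr1 (@nat_of_ord _)) /=.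
  have hjl : wid r != ord_max.
    by apply/eqP => /(congr1 (@nat_of_ord _)) /=; have := ltn_ord r; lia.
  have := three (fun r => v 0 (lshift k r)) (fun r => v 0 (rshift k.+1 r)) hij hil hjl r0 (ltn_ord r).
  rewrite /= !G (bigD1 r) //= big1 => [|r' nr]; last by rewrite wid_eq (negbTE nr) mulr0.
  rewrite eqxx addr0 mulr1 => h; lra.
have S2 : forall r : 'I_k, v 0 (rshift k.+1 r) = 0.
  move=> r.
  have x1 : (r.+1 < k.+2)%N by have := ltn_ord r; lia.
  have y1 : (r.+2 < k.+2)%N by have := ltn_ord r; lia.
  have hxy : Ordinal x1 != Ordinal y1 by apply/eqP => /(congr1 (@nat_of_ord _)) /=; lia.
  have := G _ _ hxy.
  rewrite big1 => [|r' _]; last first.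
    case: (posnP r') => [r0|r0]; last by rewrite S1 // mul0r.
    rewrite entE !inE -!val_eqE /= r0 /=; by rewrite mulr0.
  rewrite add0r (bigD1 r) //= big1 => [|r' nr]; last first.
    rewrite entE !inE /=.
    have : r' != r :> nat by [].
    by case: (ltnP r.+1 r'.+2) => h1; case: (ltnP r.+2 r'.+2) => h2 /=;
      rewrite ?mulr0 //; lia.
  rewrite entE !inE /= ltnSn ltnn /= mulr1 addr0; by [].
have S0 : v 0 (lshift k ord0) = 0.
  have o1 : (1 < k.+2)%N by [].
  have h01 : (ord0 : 'I_k.+2) != Ordinal o1 by [].
  have := G _ _ h01.
  rewrite [X in X + _ = _](bigD1 ord0) //= big1 => [|r' nr]; last first.
    by rewrite S1 ?mul0r // lt0n.
  rewrite big1 => [|r' _]; last by rewrite entE !inE /= mulr0.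
  by rewrite entE !inE /= mulr1 !addr0.
apply/rowP => idx; rewrite mxE; case: (splitP idx) => [r|r] hr.
  rewrite (_ : idx = lshift k r); last by apply/ord_inj.
  case: (posnP r) => [r0|r0]; last exact: S1.
  by rewrite (_ : r = ord0) //; apply/ord_inj.
by rewrite (_ : idx = rshift k.+1 r) //; apply/ord_inj.
Qed.

Lemma chi_row (R : realType) k (X : {set 'I_k.+2}) :
  is_min_cut (wt R k) X -> (chi R X <= mincut_matrix (wt R k))%MS.
Proof.
move=> h; have <- : row (enum_rank X) (mincut_matrix (wt R k)) = chi R X.
  by rewrite rowK enum_rankK h.
exact: row_sub.
Qed.

Lemma rankM (R : realType) k : \rank (mincut_matrix (wt R k)) = (k.+1 + k)%N.
Proof.
have h1 : (mincut_matrix (wt R k) <= col_mx (Smx R k) (Pmx R k))%MS.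
  apply/row_subP => i; rewrite rowK; case: ifP => mc; last exact: sub0mx.
  case: (classify mc) => [[v vk ->]|[m hm ->]].
    have -> : chi R [set v] = row (lshift k (Ordinal vk)) (col_mx (Smx R k) (Pmx R k)).
      rewrite rowKu rowK; congr (chi R [set _]); exact/ord_inj.
    exact: row_sub.
  have mk : (m - 2 < k)%N by lia.
  have -> : chi R (pref k m) = row (rshift k.+1 (Ordinal mk)) (col_mx (Smx R k) (Pmx R k)).
    rewrite rowKd rowK /=; congr (chi R (pref k _)); lia.
  exact: row_sub.
have h2 : (col_mx (Smx R k) (Pmx R k) <= mincut_matrix (wt R k))%MS.
  rewrite col_mx_sub; apply/andP; split; apply/row_subP => r; rewrite rowK; apply: chi_row.
    exact: mincut_star.
  apply: mincut_pref => //; have := ltn_ord r; lia.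
have := mxrankS h1; have := mxrankS h2; have := Bfree R k; rewrite /row_free => /eqP ->.
lia.
Qed.


Lemma wt_pos (R : realType) k : positive_weighting (wt R k).
Proof.
move=> e; rewrite /wt ffunE; apply: divr_gt0; last by rewrite ltr0n.
rewrite ltr0n.
case: e => s hs; have [x [y [xy sE]]] := cards2P _ hs.
have [x' [y' [lxy {}sE]]] : exists x y : 'I_k.+2, (x < y)%N /\ s = [set x; y].
  have [h|h] := ltnP x y; first by exists x, y.
  exists y, x; split; last by rewrite sE setUC.
  rewrite ltn_neqAle h andbT; apply: contra xy => /eqP h'; apply/eqP/ord_inj; by [].
set c := (x', y').
have p0 : pos c 0 = y'.
  apply/ord_inj; rewrite posE // /cyc /= lxy /g; by [].
have p1 : pos c 1 = x'.
  apply/ord_inj; rewrite posE // /cyc /= lxy /g /=; lia.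
have hE : exist (fun e : {set 'I_k.+2} => #|e| == 2%N) s hs = E c 0.
  apply/val_inj; change (s = [set pos c 0; pos c 1]); by rewrite p0 p1 sE setUC.
rewrite (bigD1 c) // (bigD1 ord0) // -hE eqxx.
apply: (leq_trans _ (leq_addr _ _)); exact: (leq_trans _ (leq_addr _ _)).
Qed.

Unset Implicit Arguments.

Theorem theorem16 (R : realType) (n : nat) (hn : (2 <= n)%N) :
  exists w : weighting R n,
    [/\ positive_weighting w,
        cdim w = (2 * n - 3)%N,
        min_cut_value w 1
      & forall v : 'I_n, is_min_cut w [set v]].
Proof.
case: n hn => [|[|k]] // _.
exists (wt R k); split.
- exact: wt_pos.
- rewrite /cdim rankM; lia.
- split; first by move=> Y pY; apply: cut_ge1.
  by exists [set ord0]; [exact: proper1 | exact: cut_star].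
- exact: mincut_star.
Qed.
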